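(* Let $m$ be a positive integer, $q>1$ real, $\kappa\in\mathbb{C}$ with $\kappa\notin\frac{2\pi i}{\log q}\mathbb{Z}$, $c\in\mathbb{C}$, and let $\Psi_0,\dots,\Psi_{m-1}$ and $\Xi_0,\dots,\Xi_{m-1}$ be $1$-periodic continuous functions such that $$\sum_{0\le k<m}(\log_qN)^k\Psi_k(\log_qN)=\sum_{0\le k<m}(\log_qN)^k\Xi_k(\log_qN)+cN^{-\kappa}+o(1)$$ for integers $N\to\infty$. Then $\Psi_k=\Xi_k$ for $0\le k<m$. *)

(* Defs.v *)
From Stdlib Require Import Reals ZArith.
From Coquelicot Require Export Coquelicot.
Open Scope R_scope.

Definition logq (q x : R) : R := ln x / ln q.

(* complex power x^z for real x > 0 : x^z = exp(z ln x)
   = exp(Re z ln x) (cos(Im z ln x) + i sin(Im z ln x)) *)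
Definition Crpow (x : R) (z : C) : C :=
  (exp (fst z * ln x) * cos (snd z * ln x),
   exp (fst z * ln x) * sin (snd z * ln x)).

Fixpoint Csum (f : nat -> C) (n : nat) : C :=
  match n with
  | O => RtoC 0
  | S n' => Cplus (Csum f n') (f n')
  end.

Definition logsum (q : R) (m : nat) (F : nat -> R -> C) (N : nat) : C :=
  let L := logq q (INR N) in Csum (fun k => Cmult (RtoC (L ^ k)) (F k L)) m.

(* Main.v *)
Require Import Defs.
From Stdlib Require Import Reals ZArith Lra Lia.
From Coquelicot Require Import Coquelicot.
Open Scope R_scope.

Definition ecis (t : R) : C := (cos t, sin t).

Lemma ecis_plus a b : ecis (a + b) = Cmult (ecis a) (ecis b).
Proof. unfold ecis, Cmult; simpl. rewrite cos_plus, sin_plus. f_equal; ring. Qed.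

Lemma Cmod_scal_cs a t : Cmod (a * cos t, a * sin t) = Rabs a.
Proof.
  unfold Cmod; simpl.
  replace ((a * cos t) * ((a * cos t) * 1) + (a * sin t) * ((a * sin t) * 1))
    with (a * a * (Rsqr (sin t) + Rsqr (cos t))) by (unfold Rsqr; ring).
  rewrite sin2_cos2, Rmult_1_r. apply sqrt_Rsqr_abs.
Qed.

Lemma Cmod_ecis t : Cmod (ecis t) = 1.
Proof.
  unfold ecis. replace (cos t, sin t) with (1 * cos t, 1 * sin t) by (f_equal; ring).
  rewrite Cmod_scal_cs. apply Rabs_R1.
Qed.

Lemma Cmod_Crpow x z : Cmod (Crpow x z) = exp (fst z * ln x).
Proof. unfold Crpow. rewrite Cmod_scal_cs. apply Rabs_right. left; apply exp_pos. Qed.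

Lemma Cmod_le_sum (z : C) : Cmod z <= Rabs (fst z) + Rabs (snd z).
Proof.
  destruct z as [a b]; unfold Cmod; simpl.
  rewrite <- (sqrt_Rsqr (Rabs a + Rabs b)) by (pose proof (Rabs_pos a); pose proof (Rabs_pos b); lra).
  apply sqrt_le_1_alt. unfold Rsqr.
  pose proof (Rabs_pos a); pose proof (Rabs_pos b).
  replace (a * (a*1) + b * (b*1)) with (Rabs a * Rabs a + Rabs b * Rabs b).
  2:{ rewrite <- !Rabs_mult. rewrite !Rabs_right; try ring; nra. }
  nra.
Qed.

Lemma Rabs_sin_le y : Rabs (sin y) <= Rabs y.
Proof.
  pose proof (SIN_bound y). pose proof PI_RGT_0. pose proof PI2_1 as P.
  destruct (Rle_or_lt 1 (Rabs y)).
  - unfold Rabs at 1; destruct (Rcase_abs (sin y)); lra.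
  - destruct (Rtotal_order y 0) as [Hy|[Hy|Hy]].
    + pose proof (sin_lt_x (-y)) as h. rewrite sin_neg in h.
      assert (0 <= sin (-y)) by (apply sin_ge_0; unfold Rabs in *; destruct (Rcase_abs y); lra).
      rewrite sin_neg in *. rewrite Rabs_left1, Rabs_left; lra.
    + subst. rewrite sin_0, Rabs_R0. lra.
    + pose proof (sin_lt_x y Hy) as h.
      assert (0 <= sin y) by (apply sin_ge_0; unfold Rabs in *; destruct (Rcase_abs y); lra).
      rewrite !Rabs_right; lra.
Qed.

Lemma ecis_near1 s : Cmod (Cminus (ecis s) 1) <= s * s + Rabs s.
Proof.
  eapply Rle_trans. apply Cmod_le_sum. unfold ecis, Cminus, Cplus, Copp; simpl.
  replace (sin s + - 0) with (sin s) by ring.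
  pose proof (Rabs_sin_le s).
  replace s with (2 * (s/2)) at 1 by field. rewrite cos_2a_sin.
  pose proof (Rabs_sin_le (s/2)).
  rewrite Rabs_left1.
  2:{ nra. }
  assert (sin (s/2) * sin (s/2) <= (s/2)*(s/2)).
  { assert (E1: sin (s/2) * sin (s/2) = Rabs (sin (s/2)) * Rabs (sin (s/2)))
      by (rewrite <- Rabs_mult; rewrite Rabs_right; nra).
    assert (E2: (s/2) * (s/2) = Rabs (s/2) * Rabs (s/2))
      by (rewrite <- Rabs_mult; rewrite Rabs_right; nra).
    rewrite E1, E2. pose proof (Rabs_pos (sin (s/2))). nra. }
  nra.
Qed.

Lemma cont_C (f : R -> C) x : continuous f x ->
  forall eps, 0 < eps -> exists eta, 0 < eta /\ forall y, Rabs (y - x) < eta -> Cmod (Cminus (f y) (f x)) < eps.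
Proof.
  intros Hc eps He.
  assert (He2 : 0 < eps / 2) by lra.
  destruct (proj1 (filterlim_locally f (f x)) Hc (mkposreal _ He2)) as [d Hd].
  exists d. split. apply cond_pos. intros y Hy.
  destruct (Hd y Hy) as [H1 H2]. simpl in H1, H2.
  eapply Rle_lt_trans. apply Cmod_le_sum.
  change (Rabs (fst (f y) - fst (f x)) < eps/2) in H1.
  change (Rabs (snd (f y) - snd (f x)) < eps/2) in H2.
  unfold Cminus, Cplus, Copp; simpl. unfold Rminus in *. lra.
Qed.

Lemma lnq_pos q (Hq : 1 < q) : 0 < ln q.
Proof. rewrite <- ln_1. apply ln_increasing; lra. Qed.

Definition rr (q x : R) (j : nat) := exp ((INR j + x) * ln q).
Definition Nseq (q x : R) (j : nat) := Z.to_nat (up (rr q x j)).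
Definition Lseq (q x : R) (j : nat) := logq q (INR (Nseq q x j)).

Lemma Nseq_bounds q x j : rr q x j < INR (Nseq q x j) <= rr q x j + 1.
Proof.
  unfold Nseq. destruct (archimed (rr q x j)) as [h1 h2].
  assert (0 < rr q x j) by apply exp_pos.
  assert (0 <= up (rr q x j))%Z by (apply le_IZR; lra).
  rewrite INR_IZR_INZ, Z2Nat.id by assumption. lra.
Qed.

Lemma Lseq_ge q x (Hq : 1 < q) j : INR j + x < Lseq q x j.
Proof.
  pose proof (lnq_pos q Hq). destruct (Nseq_bounds q x j).
  unfold Lseq, logq. apply Rmult_lt_reg_r with (ln q); auto.
  unfold Rdiv; rewrite Rmult_assoc, Rinv_l, Rmult_1_r by lra.
  rewrite <- (ln_exp ((INR j + x) * ln q)). apply ln_increasing. apply exp_pos. exact H0.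
Qed.

Lemma ln_1p_le r : 0 < r -> ln (r + 1) <= ln r + / r.
Proof.
  intros Hr. replace (r + 1) with (r * (1 + / r)) by (field; lra).
  rewrite ln_mult; try lra. 2:{ pose proof (Rinv_0_lt_compat r Hr); lra. }
  apply Rplus_le_compat_l. rewrite <- (ln_exp (/ r)) at 2. apply ln_le.
  pose proof (Rinv_0_lt_compat r Hr); lra. apply exp_ineq1_le.
Qed.

Lemma Lseq_le q x (Hq : 1 < q) j : Lseq q x j <= INR j + x + / (rr q x j * ln q).
Proof.
  pose proof (lnq_pos q Hq). destruct (Nseq_bounds q x j). assert (0 < rr q x j) by apply exp_pos.
  unfold Lseq, logq. apply Rmult_le_reg_r with (ln q); auto.
  unfold Rdiv; rewrite Rmult_assoc, Rinv_l, Rmult_1_r by lra.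
  rewrite Rmult_plus_distr_r, Rinv_mult, Rmult_assoc, Rinv_l, Rmult_1_r by lra.
  eapply Rle_trans. apply ln_le. lra. exact H1.
  eapply Rle_trans. apply ln_1p_le; auto. unfold rr at 1. rewrite ln_exp. lra.
Qed.

Lemma seq_ev q x (Hq : 1 < q) M eps : 0 < eps -> exists J, forall j, (J <= j)%nat ->
  Lseq q x j - (INR j + x) < eps /\ M <= INR (Nseq q x j) /\ M <= Lseq q x j.
Proof.
  intros He. pose proof (lnq_pos q Hq).
  assert (exists K, M <= K /\ 1 <= K /\ / (eps * ln q) <= K) as [K [HK1 [HK2 HK3]]].
  { exists (Rmax (Rmax M 1) (/ (eps * ln q))).
    pose proof (Rmax_l M 1). pose proof (Rmax_r M 1).
    pose proof (Rmax_l (Rmax M 1) (/ (eps * ln q))). pose proof (Rmax_r (Rmax M 1) (/ (eps * ln q))).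
    lra. }
  destruct (INR_unbounded (Rmax (K / ln q - x) (M - x))) as [J HJ].
  exists J. intros j Hj. apply le_INR in Hj.
  pose proof (Rmax_l (K / ln q - x) (M - x)). pose proof (Rmax_r (K / ln q - x) (M - x)).
  assert (Hj1 : K / ln q - x < INR j) by lra.
  assert (Hj2 : M - x < INR j) by lra.
  clear H0 H1.
  assert (Hr : K < rr q x j).
  { unfold rr. pose proof (exp_ineq1_le ((INR j + x) * ln q)).
    assert (K <= (INR j + x) * ln q).
    { apply Rmult_lt_compat_r with (r := ln q) in Hj1; auto.
      unfold Rdiv in Hj1. revert Hj1. 
      replace ((K * / ln q - x) * ln q) with (K - x * ln q) by (field; lra). nra. }
    lra. }
  destruct (Nseq_bounds q x j). pose proof (Lseq_ge q x Hq j). pose proof (Lseq_le q x Hq j).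
  split; [|split]; try lra.
  assert (/ (rr q x j * ln q) < eps); [|lra].
  assert (0 < eps * ln q) by nra.
  assert (/ (eps * ln q) < rr q x j) by lra.
  apply Rmult_lt_reg_r with (rr q x j * ln q). nra.
  rewrite Rinv_l by nra.
  apply Rmult_lt_compat_l with (r := eps * ln q) in H5; auto.
  rewrite Rinv_r in H5 by lra. nra.
Qed.


Lemma per_nat (f : R -> C) : (forall y, f (y + 1) = f y) -> forall j y, f (INR j + y) = f y.
Proof.
  intros Hp j; induction j as [|j IH]; intros y.
  - simpl. f_equal. ring.
  - rewrite S_INR. replace (INR j + 1 + y) with ((INR j + y) + 1) by ring. rewrite Hp. apply IH.
Qed.

Lemma Csum_bound (f : nat -> C) n g : (forall k, (k < n)%nat -> Cmod (f k) <= g) ->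
  Cmod (Csum f n) <= INR n * g.
Proof.
  induction n as [|n IH]; intros H.
  - simpl. rewrite Cmod_0. lra.
  - simpl Csum. eapply Rle_trans. apply Cmod_triangle. rewrite S_INR.
    assert (Cmod (Csum f n) <= INR n * g) by (apply IH; intros; apply H; lia).
    assert (Cmod (f n) <= g) by (apply H; lia). lra.
Qed.

Lemma Csum_ext (f g : nat -> C) n : (forall k, (k < n)%nat -> f k = g k) -> Csum f n = Csum g n.
Proof.
  induction n as [|n IH]; intros H; simpl; auto.
  rewrite IH, H; auto; intros; apply H; lia.
Qed.

Lemma Csum_minus (f g : nat -> C) n :
  Cminus (Csum f n) (Csum g n) = Csum (fun k => Cminus (f k) (g k)) n.
Proof.
  induction n as [|n IH]; simpl. ring. rewrite <- IH. ring.
Qed.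

Lemma small_C (z : C) : (forall eps, 0 < eps -> Cmod z < eps) -> z = 0.
Proof.
  intros H. apply Cmod_eq_0. pose proof (Cmod_ge_0 z).
  destruct (Req_dec (Cmod z) 0); auto. specialize (H (Cmod z)). lra.
Qed.

Lemma bound_near (D : nat -> R -> C) m x :
  (forall k, (k < m)%nat -> continuous (D k) x) ->
  exists B eta, 0 <= B /\ 0 < eta /\
    forall k y, (k < m)%nat -> Rabs (y - x) < eta -> Cmod (D k y) <= B.
Proof.
  induction m as [|m IH]; intros Hc.
  - exists 0, 1. repeat split; try lra. intros; lia.
  - destruct IH as [B [eta [HB [He Hb]]]]. intros; apply Hc; lia.
    destruct (cont_C (D m) x (Hc m (Nat.lt_succ_diag_r m)) 1 Rlt_0_1) as [e2 [He2 Hb2]].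
    exists (Rmax B (Cmod (D m x) + 1)), (Rmin eta e2).
    pose proof (Rmax_l B (Cmod (D m x) + 1)). pose proof (Rmax_r B (Cmod (D m x) + 1)).
    repeat split. lra. apply Rmin_pos; auto.
    intros k y Hk Hy.
    pose proof (Rmin_l eta e2). pose proof (Rmin_r eta e2).
    destruct (Nat.eq_dec k m) as [->|Hne].
    + specialize (Hb2 y ltac:(lra)).
      replace (D m y) with (Cplus (Cminus (D m y) (D m x)) (D m x)) by ring.
      eapply Rle_trans. apply Cmod_triangle. lra.
    + eapply Rle_trans. apply Hb. lia. lra. lra.
Qed.

Lemma real_step P a uu s e L mB eps : 1 <= P -> 1 <= L -> 0 < eps -> 0 <= mB ->
  mB * 4 < eps * L -> P * a <= uu + s + e -> uu < eps / 4 ->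
  s <= mB * P / L -> e <= eps / 4 * P -> a < 3 * eps / 4.
Proof.
  intros HP HL He HmB H4 Ha Hu Hs Hee.
  assert (mB * P / L < eps / 4 * P).
  { apply Rmult_lt_reg_r with L. lra. unfold Rdiv. rewrite Rmult_assoc, (Rmult_comm (/ L)), 
    Rmult_assoc, Rinv_r, Rmult_1_r by lra. nra. }
  assert (P * a < P * (3 * eps / 4)) by nra.
  apply Rmult_lt_reg_l with P; lra.
Qed.

Definition Gsum (D : nat -> R -> C) (n : nat) (L : R) : C :=
  Csum (fun k => Cmult (RtoC (L ^ k)) (D k L)) n.

Lemma top (m : nat) (D : nat -> R -> C) (x : R) (L : nat -> R) (E : nat -> C) :
  (forall k, (k <= m)%nat -> continuous (D k) x) ->
  (forall k j, (k <= m)%nat -> D k (L j) = D k (L j - INR j)) ->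
  (forall M eps, 0 < eps -> exists J, forall j, (J <= j)%nat -> Rabs (L j - INR j - x) < eps /\ M <= L j) ->
  (forall eps, 0 < eps -> exists J, forall j, (J <= j)%nat -> Cmod (E j) <= eps * L j ^ m) ->
  (forall eps, 0 < eps -> exists J, forall j, (J <= j)%nat -> Cmod (Cminus (Gsum D (S m) (L j)) (E j)) < eps) ->
  D m x = 0.
Proof.
  intros Hc Hper Hseq HE Hu.
  apply small_C. intros eps He.
  assert (He4 : 0 < eps / 4) by lra.
  destruct (cont_C (D m) x (Hc m (Nat.le_refl m)) _ He4) as [e1 [He1 Hb1]].
  destruct (bound_near D m x) as [B [e2 [HB [He2 Hb2]]]]. intros; apply Hc; lia.
  destruct (Hseq (Rmax 1 (INR m * B * 4 / eps + 1)) (Rmin e1 e2) (Rmin_pos _ _ He1 He2)) as [J1 HJ1].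
  destruct (HE _ He4) as [J2 HJ2]. destruct (Hu _ He4) as [J3 HJ3].
  set (j := (J1 + J2 + J3)%nat).
  destruct (HJ1 j ltac:(unfold j; lia)) as [Hy HLj].
  specialize (HJ2 j ltac:(unfold j; lia)). specialize (HJ3 j ltac:(unfold j; lia)).
  set (Lj := L j) in *. set (y := Lj - INR j) in *.
  assert (HDk : forall k, (k <= m)%nat -> D k Lj = D k y) by (intros; unfold y, Lj; apply Hper; auto).
  pose proof (Rmin_l e1 e2). pose proof (Rmin_r e1 e2).
  pose proof (Rmax_l 1 (INR m * B * 4 / eps + 1)). pose proof (Rmax_r 1 (INR m * B * 4 / eps + 1)).
  assert (HL1 : 1 <= Lj) by lra.
  assert (Hdm : Cmod (Cminus (D m y) (D m x)) < eps / 4) by (apply Hb1; lra).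
  set (S0 := Gsum D m Lj).
  assert (HS : Cmod S0 <= INR m * (B * Lj ^ m / Lj)).
  { apply Csum_bound. intros k Hk. rewrite Cmod_mult, Cmod_R.
    rewrite HDk by lia.
    rewrite Rabs_right by (apply Rle_ge, pow_le; lra).
    assert (Cmod (D k y) <= B) by (apply Hb2; auto; lra).
    assert (Lj ^ k * Lj <= Lj ^ m).
    { replace (Lj ^ k * Lj) with (Lj ^ S k) by (simpl; ring). apply Rle_pow; auto. }
    assert (0 <= Lj ^ k) by (apply pow_le; lra).
    assert (Lj ^ k <= Lj ^ m / Lj).
    { apply Rmult_le_reg_r with Lj. lra. unfold Rdiv. rewrite Rmult_assoc, Rinv_l, Rmult_1_r by lra. auto. }
    pose proof (Cmod_ge_0 (D k y)).
    unfold Rdiv in *. rewrite Rmult_assoc. nra. }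
  assert (Hsplit : Cmult (RtoC (Lj ^ m)) (D m y) =
     Cplus (Cminus (Cminus (Gsum D (S m) Lj) (E j)) S0) (E j)).
  { unfold S0, Gsum. simpl Csum. fold (Gsum D m Lj). rewrite <- (HDk m) by lia. ring. }
  assert (HP : 1 <= Lj ^ m) by (apply pow_R1_Rle; lra).
  assert (Hmain : Cmod (D m y) < 3 * eps / 4).
  { apply (real_step (Lj ^ m) _ (Cmod (Cminus (Gsum D (S m) Lj) (E j))) (Cmod S0) (Cmod (E j)) Lj (INR m * B)); auto.
    - pose proof (pos_INR m). nra.
    - assert (INR m * B * 4 / eps + 1 <= Lj) by lra.
      assert (INR m * B * 4 / eps < Lj) by lra.
      apply Rmult_lt_compat_l with (r := eps) in H4; auto.
      unfold Rdiv in H4. replace (eps * (INR m * B * 4 * / eps)) with (INR m * B * 4) in H4 by (field; lra). lra.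
    - replace (Lj ^ m) with (Cmod (RtoC (Lj ^ m))) at 1 by (rewrite Cmod_R; apply Rabs_right; lra).
      rewrite <- Cmod_mult, Hsplit.
      eapply Rle_trans. apply Cmod_triangle. 
      eapply Rle_trans. apply Rplus_le_compat_r. unfold Cminus at 1. apply Cmod_triangle.
      rewrite Cmod_opp. lra.
    - unfold Rdiv in *. lra. }
  replace (D m x) with (Cminus (D m y) (Cminus (D m y) (D m x))) by ring.
  eapply Rle_lt_trans. unfold Cminus at 1. apply Cmod_triangle. rewrite Cmod_opp. lra.
Qed.

Lemma base0 (D : nat -> R -> C) (x : R) (L : nat -> R) (c : C) (w : R) :
  continuous (D O) x ->
  (forall j, D O (L j) = D O (L j - INR j)) ->
  (forall eps, 0 < eps -> exists J, forall j, (J <= j)%nat -> Rabs (L j - INR j - x) < eps) ->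
  (forall eps, 0 < eps -> exists J, forall j, (J <= j)%nat ->
      Cmod (Cminus (Gsum D 1 (L j)) (Cmult c (ecis (- w * L j)))) < eps) ->
  ecis (- w) <> 1 ->
  D O x = 0.
Proof.
  intros Hc Hper Hseq Hu Hw.
  set (e := ecis (- w)).
  set (mu := Cmod (Cminus 1 e)).
  assert (Hmu : 0 < mu).
  { apply Cmod_gt_0. intros H. apply Hw. fold e. 
    replace e with (Cminus 1 (Cminus 1 e)) by ring. rewrite H. ring. }
  set (b := fun j : nat => Cmult c (ecis (- w * (INR j + x)))).
  apply small_C. intros eps He.
  set (ep := eps * mu / 6).
  assert (Hep : 0 < ep) by (unfold ep; apply Rmult_lt_0_compat; [nra|lra]).
  destruct (cont_C (D O) x Hc ep Hep) as [e1 [He1 Hb1]].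
  set (K := Cmod c * (w * w + Rabs w) + 1).
  assert (HK : 0 < K) by (unfold K; pose proof (Cmod_ge_0 c); pose proof (Rabs_pos w); nra).
  set (eta := Rmin (Rmin e1 1) (ep / K)).
  assert (Heta : 0 < eta) by (unfold eta; repeat apply Rmin_pos; auto; try lra; apply Rdiv_lt_0_compat; auto).
  destruct (Hseq eta Heta) as [J1 HJ1]. destruct (Hu ep Hep) as [J2 HJ2].
  assert (Hbj : forall j, (J1 + J2 <= j)%nat -> Cmod (Cminus (D O x) (b j)) < 3 * ep).
  { intros j Hj. specialize (HJ1 j ltac:(lia)). specialize (HJ2 j ltac:(lia)).
    set (d := L j - INR j - x) in *.
    pose proof (Rmin_l (Rmin e1 1) (ep / K)) as R1. pose proof (Rmin_r (Rmin e1 1) (ep / K)) as R2.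
    pose proof (Rmin_l e1 1) as R3. pose proof (Rmin_r e1 1) as R4. fold eta in R1, R2.
    assert (H1 : Cmod (Cminus (D O (L j - INR j)) (D O x)) < ep) by (apply Hb1; unfold d in HJ1; lra).
    assert (Hab : Cmult c (ecis (- w * L j)) = Cmult (b j) (ecis (- w * d))).
    { unfold b. rewrite <- Cmult_assoc, <- ecis_plus. f_equal. f_equal. unfold d. ring. }
    assert (H2 : Cmod (Cminus (Cmult c (ecis (- w * L j))) (b j)) < ep).
    { rewrite Hab. replace (Cminus (Cmult (b j) (ecis (- w * d))) (b j)) with
        (Cmult (b j) (Cminus (ecis (- w * d)) 1)) by ring.
      rewrite Cmod_mult. unfold b. rewrite Cmod_mult, Cmod_ecis, Rmult_1_r.
      pose proof (ecis_near1 (- w * d)).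
      assert (Rabs d < eta) by exact HJ1.
      assert ((- w * d) * (- w * d) + Rabs (- w * d) <= (w * w + Rabs w) * Rabs d).
      { rewrite Rabs_mult, Rabs_Ropp. 
        replace ((- w * d) * (- w * d)) with ((w * w) * (Rabs d * Rabs d)).
        2:{ rewrite <- Rabs_mult, Rabs_right by nra. ring. }
        pose proof (Rabs_pos d). pose proof (Rabs_pos w).
        assert (Rabs d * Rabs d <= Rabs d) by nra.
        assert (0 <= w * w) by nra. nra. }
      assert (H7 : Rabs d < ep / K) by lra.
      assert (H8 : K * Rabs d < ep).
      { apply Rmult_lt_compat_l with (r := K) in H7; auto. unfold Rdiv in H7.
        replace (K * (ep * / K)) with ep in H7 by (field; lra). lra. }
      pose proof (Cmod_ge_0 c). pose proof (Cmod_ge_0 (Cminus (ecis (- w * d)) 1)).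
      pose proof (Rabs_pos d). pose proof (Rabs_pos w).
      unfold K in H8. nra. }
    assert (Hg : Gsum D 1 (L j) = D O (L j)) by (unfold Gsum; simpl; ring).
    rewrite Hg, Hper in HJ2.
    replace (Cminus (D O x) (b j)) with
      (Cplus (Cplus (Copp (Cminus (D O (L j - INR j)) (D O x)))
         (Cminus (D O (L j - INR j)) (Cmult c (ecis (- w * L j)))))
         (Cminus (Cmult c (ecis (- w * L j))) (b j))) by ring.
    eapply Rle_lt_trans. apply Cmod_triangle.
    eapply Rle_lt_trans. apply Rplus_le_compat_r. apply Cmod_triangle.
    rewrite Cmod_opp. lra. }
  assert (Hb1' : b (S (J1 + J2)) = Cmult (b (J1 + J2)%nat) e).
  { unfold b, e. rewrite <- Cmult_assoc, <- ecis_plus. f_equal. f_equal. rewrite S_INR. ring. }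
  pose proof (Hbj (J1 + J2)%nat (le_n _)) as A1. pose proof (Hbj (S (J1 + J2)) ltac:(lia)) as A2.
  rewrite Hb1' in A2.
  assert (Cmult (D O x) (Cminus 1 e) =
    Cminus (Cminus (D O x) (Cmult (b (J1 + J2)%nat) e)) (Cmult e (Cminus (D O x) (b (J1 + J2)%nat)))) by ring.
  assert (Cmod (D O x) * mu < 6 * ep).
  { unfold mu. rewrite <- Cmod_mult, H. eapply Rle_lt_trans. unfold Cminus at 1. apply Cmod_triangle.
    rewrite Cmod_opp, Cmod_mult. unfold e at 2. rewrite Cmod_ecis. lra. }
  unfold ep in H0. apply Rmult_lt_reg_r with mu; auto. lra.
Qed.

Lemma exp_mul_pow n s : exp (INR n * s) = exp s ^ n.
Proof.
  induction n as [|n IH]. simpl. rewrite Rmult_0_l. apply exp_0.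
  rewrite S_INR, Rmult_plus_distr_r, exp_plus, IH, Rmult_1_l. simpl. ring.
Qed.

Lemma exp_ge_pow n t : (0 < n)%nat -> 0 <= t -> (t / INR n) ^ n <= exp t.
Proof.
  intros Hn Ht. assert (0 < INR n) by (apply lt_0_INR; auto).
  replace t with (INR n * (t / INR n)) at 2 by (field; lra).
  rewrite exp_mul_pow. apply pow_incr. split.
  apply Rdiv_le_0_compat; lra. pose proof (exp_ineq1_le (t / INR n)). lra.
Qed.

Lemma negcase (m : nat) (D : nat -> R -> C) (x : R) (L : nat -> R) (c : C) (b : R) (E : nat -> C) :
  0 < b ->
  (forall k, (k < m)%nat -> continuous (D k) x) ->
  (forall k j, (k < m)%nat -> D k (L j) = D k (L j - INR j)) ->
  (forall M eps, 0 < eps -> exists J, forall j, (J <= j)%nat -> Rabs (L j - INR j - x) < eps /\ M <= L j) ->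
  (forall j, Cmod (E j) = Cmod c * exp (b * L j)) ->
  (exists J, forall j, (J <= j)%nat -> Cmod (Cminus (Gsum D m (L j)) (E j)) < 1) ->
  c = 0.
Proof.
  intros Hb Hc Hper Hseq HE [J0 Hu].
  destruct (bound_near D m x Hc) as [B [e2 [HB [He2 Hb2]]]].
  apply small_C. intros eps He.
  set (beta := (b / INR (S m)) ^ (S m)).
  assert (Hbeta : 0 < beta) by (unfold beta; apply pow_lt; apply Rdiv_lt_0_compat; auto; apply lt_0_INR; lia).
  set (M := Rmax 1 ((1 + INR m * B) / (eps * beta) + 1)).
  destruct (Hseq M e2 He2) as [J1 HJ1].
  set (j := (J0 + J1)%nat).
  destruct (HJ1 j ltac:(unfold j; lia)) as [Hy HLj]. specialize (Hu j ltac:(unfold j; lia)).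
  set (Lj := L j) in *. set (y := Lj - INR j) in *.
  assert (HDk : forall k, (k < m)%nat -> D k Lj = D k y) by (intros; unfold y, Lj; apply Hper; auto).
  pose proof (Rmax_l 1 ((1 + INR m * B) / (eps * beta) + 1)).
  pose proof (Rmax_r 1 ((1 + INR m * B) / (eps * beta) + 1)). fold M in H, H0.
  assert (HL1 : 1 <= Lj) by lra.
  assert (HP : 1 <= Lj ^ m) by (apply pow_R1_Rle; lra).
  assert (HS : Cmod (Gsum D m Lj) <= INR m * (B * Lj ^ m)).
  { apply Csum_bound. intros k Hk. rewrite Cmod_mult, Cmod_R.
    rewrite HDk by lia.
    rewrite Rabs_right by (apply Rle_ge, pow_le; lra).
    assert (Cmod (D k y) <= B) by (apply Hb2; auto; lra).
    assert (Lj ^ k <= Lj ^ m) by (apply Rle_pow; auto; lia).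
    assert (0 <= Lj ^ k) by (apply pow_le; lra).
    pose proof (Cmod_ge_0 (D k y)). nra. }
  assert (HEj : Cmod (E j) <= 1 + INR m * B * Lj ^ m).
  { replace (E j) with (Cminus (Gsum D m Lj) (Cminus (Gsum D m Lj) (E j))) by ring.
    eapply Rle_trans. unfold Cminus at 1. apply Cmod_triangle. rewrite Cmod_opp. lra. }
  rewrite HE in HEj. fold Lj in HEj.
  pose proof (exp_ge_pow (S m) (b * Lj) ltac:(lia) ltac:(nra)) as Hexp.
  replace ((b * Lj / INR (S m)) ^ S m) with (beta * Lj ^ m * Lj) in Hexp
    by (unfold beta; replace (b * Lj / INR (S m)) with ((b / INR (S m)) * Lj)
          by (field; apply not_0_INR; lia);
        rewrite Rpow_mult_distr; simpl; ring).
  pose proof (Cmod_ge_0 c).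
  assert (Cmod c * (beta * Lj ^ m * Lj) <= (1 + INR m * B) * Lj ^ m).
  { pose proof (pos_INR m). assert (0 <= INR m * B) by nra. nra. }
  assert (Cmod c * beta * Lj <= 1 + INR m * B).
  { apply Rmult_le_reg_r with (Lj ^ m). lra. nra. }
  assert ((1 + INR m * B) / (eps * beta) < Lj) by lra.
  assert (1 + INR m * B < eps * beta * Lj).
  { apply Rmult_lt_compat_l with (r := eps * beta) in H4; [|nra].
    unfold Rdiv in H4. replace (eps * beta * ((1 + INR m * B) * / (eps * beta))) with (1 + INR m * B) in H4
      by (field; nra). lra. }
  assert (Cmod c * (beta * Lj) < eps * (beta * Lj)) by nra.
  apply Rmult_lt_reg_r with (beta * Lj). nra. lra.
Qed.

Lemma seq_abs q x : 1 < q -> forall M eps, 0 < eps -> exists J, forall j, (J <= j)%nat ->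
  Rabs (Lseq q x j - INR j - x) < eps /\ M <= Lseq q x j /\ M <= INR (Nseq q x j).
Proof.
  intros Hq M eps He. destruct (seq_ev q x Hq M eps He) as [J HJ]. exists J. intros j Hj.
  destruct (HJ j Hj) as [h1 [h2 h3]]. pose proof (Lseq_ge q x Hq j).
  repeat split; auto. rewrite Rabs_right; lra.
Qed.

Lemma seq_per (f : R -> C) q x : (forall y, f (y + 1) = f y) -> forall j,
  f (Lseq q x j) = f (Lseq q x j - INR j).
Proof.
  intros Hp j. replace (Lseq q x j) with (INR j + (Lseq q x j - INR j)) at 1 by ring.
  apply per_nat; auto.
Qed.

Lemma ln_eq q N : 1 < q -> ln N = logq q N * ln q.
Proof. intros Hq. pose proof (lnq_pos q Hq). unfold logq. field. lra. Qed.

Lemma cos1_int w : cos w = 1 -> exists k : Z, w = 2 * PI * IZR k.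
Proof.
  intros H. replace w with (2 * (w / 2)) in H by field. rewrite cos_2a_sin in H.
  assert (sin (w/2) = 0) by nra. destruct (sin_eq_0_0 _ H0) as [k Hk]. exists k. lra.
Qed.

Definition Eterm (c kappa : C) (N : nat) : C := Cmult c (Crpow (INR N) (Copp kappa)).

Lemma Gsum_S D n L : Gsum D (S n) L = Cplus (Gsum D n L) (Cmult (RtoC (L ^ n)) (D n L)).
Proof. reflexivity. Qed.

Lemma gen (q : R) (kappa c : C) :
  1 < q ->
  (forall z : Z, kappa <> (0, 2 * PI * IZR z / ln q)) ->
  (c = 0 \/ 0 <= fst kappa) ->
  forall n (D : nat -> R -> C),
  (forall k x, (k < n)%nat -> D k (x + 1) = D k x) ->
  (forall k x, (k < n)%nat -> continuous (D k) x) ->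
  (forall eps : R, 0 < eps -> exists N0 : nat, forall N : nat, (N0 <= N)%nat ->
     Cmod (Cminus (Gsum D n (logq q (INR N))) (Eterm c kappa N)) < eps) ->
  forall k x, (k < n)%nat -> D k x = 0.
Proof.
  intros Hq Hk Hc. pose proof (lnq_pos q Hq) as Hlq.
  induction n as [|n IH]; intros D Hp Hct Hu.
  - intros; lia.
  - assert (Htop : forall x, D n x = 0).
    { intros x.
      set (L := Lseq q x).
      assert (Hper : forall k j, (k <= n)%nat -> D k (L j) = D k (L j - INR j)).
      { intros k j Hkn. apply seq_per. intros; apply Hp; lia. }
      assert (Hseq : forall M eps, 0 < eps -> exists J, forall j, (J <= j)%nat ->
                Rabs (L j - INR j - x) < eps /\ M <= L j).
      { intros M eps He. destruct (seq_abs q x Hq M eps He) as [J HJ]. exists J.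
        intros j Hj. destruct (HJ j Hj) as [? [? ?]]. split; auto. }
      assert (Hus : forall eps, 0 < eps -> exists J, forall j, (J <= j)%nat ->
                Cmod (Cminus (Gsum D (S n) (L j)) (Eterm c kappa (Nseq q x j))) < eps).
      { intros eps He. destruct (Hu eps He) as [N0 HN0].
        destruct (seq_abs q x Hq (INR N0) 1 Rlt_0_1) as [J HJ]. exists J. intros j Hj.
        destruct (HJ j Hj) as [? [? ?]]. apply HN0. apply INR_le. auto. }
      assert (HEmod : forall j, Cmod (Eterm c kappa (Nseq q x j)) = Cmod c * exp (- fst kappa * ln q * L j)).
      { intros j. unfold Eterm. rewrite Cmod_mult, Cmod_Crpow. simpl fst.
        rewrite (ln_eq q _ Hq). fold (Lseq q x j). fold L. f_equal. f_equal. ring. }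
      destruct (Req_dec (fst kappa) 0) as [Hk0|Hk0]; [destruct n as [|n']|].
      -
        apply (base0 D x L c (snd kappa * ln q)).
        + apply Hct; lia.
        + intros j. apply Hper; lia.
        + intros eps He. destruct (Hseq 0 eps He) as [J HJ]. exists J. intros j Hj. apply HJ; auto.
        + intros eps He. destruct (Hus eps He) as [J HJ]. exists J. intros j Hj.
          specialize (HJ j Hj).
          replace (Cmult c (ecis (- (snd kappa * ln q) * L j))) with (Eterm c kappa (Nseq q x j)); auto.
          unfold Eterm, Crpow, ecis. f_equal. simpl. rewrite Hk0.
          rewrite (ln_eq q _ Hq). fold (Lseq q x j). fold L.
          replace (- 0 * (L j * ln q)) with 0 by ring. rewrite exp_0, !Rmult_1_l.
          f_equal; f_equal; ring.
        + intros He. unfold ecis in He. injection He as He1 He2.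
          rewrite cos_neg in He1. destruct (cos1_int _ He1) as [z Hz].
          apply (Hk z). destruct kappa as [k1 k2]. simpl in *. subst k1. f_equal.
          apply Rmult_eq_reg_r with (ln q); [|lra]. rewrite <- Hz. field. lra.
      - apply (top (S n') D x L (fun j => Eterm c kappa (Nseq q x j))); auto.
        + intros; apply Hct; lia.
        + intros eps He. destruct (Hseq (Rmax 1 (Cmod c / eps)) 1 Rlt_0_1) as [J HJ]. exists J.
          intros j Hj. destruct (HJ j Hj) as [_ HL]. rewrite HEmod, Hk0.
          replace (- 0 * ln q * L j) with 0 by ring. rewrite exp_0, Rmult_1_r.
          pose proof (Rmax_l 1 (Cmod c / eps)) as Mx1. pose proof (Rmax_r 1 (Cmod c / eps)) as Mx2.
          assert (L j <= L j ^ S n') by (rewrite <- pow_1 at 1; apply Rle_pow; [lra|lia]).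
          assert (Cmod c <= eps * L j).
          { assert (Mx3 : Cmod c / eps <= L j) by lra.
            apply Rmult_le_compat_l with (r := eps) in Mx3; [|lra]. unfold Rdiv in Mx3.
            replace (eps * (Cmod c * / eps)) with (Cmod c) in Mx3 by (field; lra). nra. }
          nra.
      - apply (top n D x L (fun j => Eterm c kappa (Nseq q x j))); auto.
        + intros; apply Hct; lia.
        + intros eps He.
          destruct Hc as [Hc0|Hkp].
          * destruct (Hseq 1 1 Rlt_0_1) as [J HJ]. exists J. intros j Hj. destruct (HJ j Hj) as [_ HL].
            rewrite HEmod, Hc0, Cmod_0, Rmult_0_l. apply Rmult_le_pos; [lra|]. apply pow_le; lra.
          * assert (Ha : 0 < fst kappa) by lra.
            set (a := fst kappa * ln q). assert (0 < a) by (unfold a; nra).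
            destruct (Hseq (Rmax 1 (Cmod c / (eps * a))) 1 Rlt_0_1) as [J HJ]. exists J.
            intros j Hj. destruct (HJ j Hj) as [_ HL]. rewrite HEmod.
            pose proof (Rmax_l 1 (Cmod c / (eps * a))) as Mx1. pose proof (Rmax_r 1 (Cmod c / (eps * a))) as Mx2.
            assert (HP : 1 <= L j ^ n) by (apply pow_R1_Rle; lra).
            replace (- fst kappa * ln q * L j) with (- (a * L j)) by (unfold a; ring).
            rewrite exp_Ropp.
            pose proof (exp_ineq1_le (a * L j)). pose proof (exp_pos (a * L j)).
            assert (Cmod c <= eps * (a * L j)).
            { assert (Mx3 : Cmod c / (eps * a) <= L j) by lra.
              apply Rmult_le_compat_l with (r := eps * a) in Mx3; [|nra]. unfold Rdiv in Mx3.
              replace (eps * a * (Cmod c * / (eps * a))) with (Cmod c) in Mx3 by (field; lra). nra. }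
            assert (Cmod c * / exp (a * L j) <= eps).
            { apply Rmult_le_reg_r with (exp (a * L j)); auto.
              rewrite Rmult_assoc, Rinv_l, Rmult_1_r by lra. nra. }
            pose proof (Cmod_ge_0 c). nra. }
    intros k x Hk'.
    destruct (Nat.eq_dec k n) as [->|Hne]; [apply Htop|].
    apply (IH D).
    + intros; apply Hp; lia.
    + intros; apply Hct; lia.
    + intros eps He. destruct (Hu eps He) as [N0 HN0]. exists N0. intros N HN.
      specialize (HN0 N HN). rewrite Gsum_S, Htop in HN0.
      replace (Cplus (Gsum D n (logq q (INR N))) (Cmult (RtoC (logq q (INR N) ^ n)) 0))
        with (Gsum D n (logq q (INR N))) in HN0 by ring. auto.
    + lia.
Qed.

Theorem lemmaF2 (m : nat) (q : R) (kappa c : C) (Psi Xi : nat -> R -> C) :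
  (0 < m)%nat ->
  1 < q ->
  (forall z : Z, kappa <> (0, 2 * PI * IZR z / ln q)) ->
  (forall k x, (k < m)%nat -> Psi k (x + 1) = Psi k x) ->
  (forall k x, (k < m)%nat -> Xi k (x + 1) = Xi k x) ->
  (forall k x, (k < m)%nat -> continuous (Psi k) x) ->
  (forall k x, (k < m)%nat -> continuous (Xi k) x) ->
  (forall eps : R, 0 < eps -> exists N0 : nat, forall N : nat, (N0 <= N)%nat ->
     Cmod (Cminus (logsum q m Psi N)
            (Cplus (logsum q m Xi N) (Cmult c (Crpow (INR N) (Copp kappa)))))
     < eps) ->
  forall k : nat, (k < m)%nat -> forall x : R, Psi k x = Xi k x.
Proof.
  intros Hm Hq Hk HpP HpX HcP HcX Hu k Hkm x.
  set (D := fun k y => Cminus (Psi k y) (Xi k y)).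
  assert (HpD : forall k x, (k < m)%nat -> D k (x + 1) = D k x).
  { intros; unfold D; rewrite HpP, HpX; auto. }
  assert (HcD : forall k x, (k < m)%nat -> continuous (D k) x).
  { intros k0 x0 Hk0. unfold D. apply (continuous_plus (fun y => Psi k0 y) (fun y => opp (Xi k0 y))).
    apply HcP; auto. apply (continuous_opp (fun y => Xi k0 y)). apply HcX; auto. }
  assert (HuD : forall eps : R, 0 < eps -> exists N0 : nat, forall N : nat, (N0 <= N)%nat ->
     Cmod (Cminus (Gsum D m (logq q (INR N))) (Eterm c kappa N)) < eps).
  { intros eps He. destruct (Hu eps He) as [N0 HN0]. exists N0. intros N HN.
    specialize (HN0 N HN).
    replace (Cminus (Gsum D m (logq q (INR N))) (Eterm c kappa N)) with
      (Cminus (logsum q m Psi N) (Cplus (logsum q m Xi N) (Cmult c (Crpow (INR N) (Copp kappa))))); auto.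
    unfold logsum, Gsum, Eterm.
    assert (Csum (fun k0 => Cmult (RtoC (logq q (INR N) ^ k0)) (D k0 (logq q (INR N)))) m =
            Cminus (Csum (fun k0 => Cmult (RtoC (logq q (INR N) ^ k0)) (Psi k0 (logq q (INR N)))) m)
                   (Csum (fun k0 => Cmult (RtoC (logq q (INR N) ^ k0)) (Xi k0 (logq q (INR N)))) m)).
    { rewrite Csum_minus. apply Csum_ext. intros. unfold D. ring. }
    rewrite H. ring. }
  assert (Hc : c = 0 \/ 0 <= fst kappa).
  { destruct (Rle_or_lt 0 (fst kappa)) as [h|h]; [right; auto|left].
    pose proof (lnq_pos q Hq).
    apply (negcase m D 0 (Lseq q 0) c (- fst kappa * ln q) (fun j => Eterm c kappa (Nseq q 0 j))).
    - nra.
    - intros; apply HcD; auto.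
    - intros k0 j Hk0. apply seq_per. intros; apply HpD; auto.
    - intros M eps He. destruct (seq_abs q 0 Hq M eps He) as [J HJ]. exists J.
      intros j Hj. destruct (HJ j Hj) as [? [? ?]]. split; auto.
    - intros j. unfold Eterm. rewrite Cmod_mult, Cmod_Crpow. simpl fst.
      rewrite (ln_eq q _ Hq). fold (Lseq q 0 j). f_equal. f_equal. ring.
    - destruct (HuD 1 Rlt_0_1) as [N0 HN0].
      destruct (seq_abs q 0 Hq (INR N0) 1 Rlt_0_1) as [J HJ]. exists J. intros j Hj.
      destruct (HJ j Hj) as [? [? ?]]. apply HN0. apply INR_le. auto. }
  assert (D k x = 0) by (apply (gen q kappa c Hq Hk Hc m D HpD HcD HuD); auto).
  unfold D in H. replace (Psi k x) with (Cplus (Cminus (Psi k x) (Xi k x)) (Xi k x)) by ring.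
  rewrite H. ring.
Qed.
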